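(* Let $\mu$ be a measure on a set $\Omega\subset\mathbb{F}^d$ ($\mathbb{F}=\mathbb{R}$ or $\mathbb{C}$) with $\mu(\Omega)=1$, and let $P$ be a finite dimensional space of $\mu$-integrable functions $\Omega\to\mathbb{F}$ which contains the constant functions. Let $$H=P\ominus\operatorname{span}\{1\}=\Bigl\{p\in P:\int_\Omega p\,d\mu=0\Bigr\}.$$ Let $\Phi=(v_1,\ldots,v_n)$ with $v_j\in\Omega$, and let $w=(w_j)\in\mathbb{R}^n$ be weights with $w_1+\cdots+w_n=1$. Write $H$ as a direct sum $H=\bigoplus_\ell H^{(\ell)}$, let $K_\ell$ be the reproducing kernel of $H^{(\ell)}$, and let $c_\ell>0$. Then $$A_{w,c}(\Phi):=\sum_{j=1}^n\sum_{k=1}^n w_jw_k\sum_\ell c_\ell K_\ell(v_j,v_k)\ \ge\ 0,$$ with equality if and only if $(v_j),(w_j)$ is a weighted design for $P$, i.e. $\int_\Omega p\,d\mu=\sum_{j=1}^n w_jp(v_j)$ for all $p\in P$.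
   Context: The inner product used is $\langle f,g\rangle_\mu=\int_\Omega f\overline{g}\,d\mu$. The reproducing kernel of a finite dimensional subspace $V$ (with respect to this inner product) is $K(x,y)=\sum_s Y_s(x)\overline{Y_s(y)}$ where $(Y_s)$ is any orthonormal basis of $V$; it satisfies $f(x)=\int_\Omega K(x,y)f(y)\,d\mu(y)$ for all $f\in V$. *)

(* Defs.v *)
From HB Require Import structures.
From mathcomp Require Import all_boot all_order all_algebra.
From mathcomp Require Import all_classical all_reals all_analysis.
From mathcomp Require Import complex.

Set Implicit Arguments.
Unset Strict Implicit.
Unset Printing Implicit Defensive.

Import Order.TTheory GRing.Theory Num.Theory.
Local Open Scope ring_scope.
Local Open Scope classical_set_scope.

Section Defs.
Context {d : measure_display} {T : measurableType d} {R : realType}.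

(* The scalar field: F = R if [isR] is true, F = C if [isR] is false.
   All scalars and functions are represented inside C = R[i]. *)
Definition scalar (isR : bool) (a : R[i]) : bool :=
  if isR then a \is Num.real else true.

Definition cintegrable (mu : {measure set T -> \bar R}) (f : T -> R[i]) :=
  mu.-integrable setT (fun x => (complex.Re (f x))%:E) /\
  mu.-integrable setT (fun x => (complex.Im (f x))%:E).

Definition cint (mu : {measure set T -> \bar R}) (f : T -> R[i]) : R[i] :=
  Complex (fine (\int[mu]_x (complex.Re (f x))%:E)%E) (fine (\int[mu]_x (complex.Im (f x))%:E)%E).

Definition cinner (mu : {measure set T -> \bar R}) (f g : T -> R[i]) : R[i] :=
  cint mu (fun x => f x * conjc (g x)).

Definition fspan (isR : bool) (m : nat) (f : 'I_m -> T -> R[i]) : set (T -> R[i]) :=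
  [set g | exists a : 'I_m -> R[i], (forall i, scalar isR (a i)) /\
             g = (fun x => \sum_(i < m) a i * f i x)].

Definition c_orthonormal (mu : {measure set T -> \bar R}) (m : nat)
    (Y : 'I_m -> T -> R[i]) : Prop :=
  forall s t : 'I_m,
    cintegrable mu (fun x => Y s x * conjc (Y t x)) /\
    cinner mu (Y s) (Y t) = (s == t)%:R.

Definition repr_kernel (m : nat) (Y : 'I_m -> T -> R[i]) (x y : T) : R[i] :=
  \sum_(s < m) Y s x * conjc (Y s y).

End Defs.

(* Main.v *)
Require Import Defs.
Set Warnings "-all".
From HB Require Import structures.
From mathcomp Require Import all_boot all_order all_algebra.
From mathcomp Require Import all_classical all_reals all_analysis.
From mathcomp Require Import complex.
From mathcomp Require Import ring.
Import Order.TTheory GRing.Theory Num.Theory.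
Local Open Scope ring_scope.
Local Open Scope classical_set_scope.
Local Open Scope complex_scope.

Lemma int_cst1 d (T : measurableType d) (R : realType) (mu : {measure set T -> \bar R})
  (mu1 : mu setT = 1%E) (k : R) : mu.-integrable setT (EFin \o cst k).
Proof.
apply/integrableP; split.
  by apply/measurable_realfun.measurable_EFinP; exact: measurable_cst.
rewrite /comp /=. 
by rewrite integral_cst // mu1 mule1 ltry.
Qed.

Lemma cintB_cst d (T : measurableType d) (R : realType) (mu : {measure set T -> \bar R})
  (mu1 : mu setT = 1%E) (p : T -> R[i]) (a : R[i]) :
  cintegrable mu p -> cint mu (fun x => p x - a) = cint mu p - a.
Proof.
case=> hre him; rewrite /cint. 
have -> : (fun x => (complex.Re (p x - a))%:E) = fun x => (complex.Re (p x) - complex.Re a)%:E.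
  by apply/funext => x; case: (p x); case: a.
have -> : (fun x => (complex.Im (p x - a))%:E) = fun x => (complex.Im (p x) - complex.Im a)%:E.
  by apply/funext => x; case: (p x); case: a.
have := @RintegralB _ _ _ mu setT (fun x => complex.Re (p x)) (fun=> complex.Re a) measurableT hre (@int_cst1 _ _ _ mu mu1 _).
have := @RintegralB _ _ _ mu setT (fun x => complex.Im (p x)) (fun=> complex.Im a) measurableT him (@int_cst1 _ _ _ mu mu1 _).
rewrite /Rintegral => -> ->.
rewrite !integral_cst // mu1 !mule1 /=.
by case: a.
Qed.

Lemma cint_realIm d (T : measurableType d) (R : realType) (mu : {measure set T -> \bar R})
  (p : T -> R[i]) : (forall x, p x \is Num.real) -> cint mu p \is Num.real.
Proof.
move=> hp; rewrite /cint complex_real.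
have -> : (fun x => (complex.Im (p x))%:E) = fun x => 0%:E.
  apply/funext => x; have := hp x; case: (p x) => a b; rewrite complex_real => /eqP -> //.
by rewrite integral0.
Qed.

Lemma A_eq d (T : measurableType d) (R : realType) (L : nat) (nl : 'I_L -> nat)
  (Y : forall l : 'I_L, 'I_(nl l) -> T -> R[i]) (c : 'I_L -> R)
  (n : nat) (v : 'I_n -> T) (w : 'I_n -> R) :
  \sum_(j < n) \sum_(k < n)
     (w j * w k)%:C * \sum_(l < L) (c l)%:C * repr_kernel (Y l) (v j) (v k)
  = \sum_(l < L) (c l)%:C * \sum_(s < nl l)
      (\sum_(j < n) (w j)%:C * Y l s (v j)) * conjc (\sum_(j < n) (w j)%:C * Y l s (v j)).
Proof.
have cj : forall (x : R) (y : R[i]), conjc (x%:C * y) = x%:C * conjc y.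
  by move=> x [a b] /=; congr Complex; ring.
have rM : forall (x y : R), (x * y)%:C = x%:C * y%:C.
  by move=> x y /=; congr Complex; ring.
rewrite /repr_kernel.
transitivity (\sum_(j < n) \sum_(k < n) \sum_(l < L) \sum_(s < nl l)
   (c l)%:C * (((w j)%:C * Y l s (v j)) * conjc ((w k)%:C * Y l s (v k)))).
  apply: eq_bigr => j _; apply: eq_bigr => k _.
  rewrite big_distrr /=; apply: eq_bigr => l _.
  rewrite mulrCA !big_distrr /=; apply: eq_bigr => s _.
  by rewrite cj rM; ring.
rewrite (@exchange_big _ 0 +%R).
under eq_bigr => j _ do rewrite exchange_big /=.
rewrite (@exchange_big _ 0 +%R).
apply: eq_bigr => l _.
transitivity ((c l)%:C * \sum_(s < nl l) \sum_(j < n) \sum_(k < n)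
   ((w j)%:C * Y l s (v j) * ((w k)%:C * Y l s (v k))^*%C)).
  rewrite big_distrr /= (@exchange_big _ 0 +%R) /=.
  under eq_bigr => j _ do rewrite (@exchange_big _ 0 +%R) /=.
  rewrite (@exchange_big _ 0 +%R) /=.
  apply: eq_bigr => s _; rewrite big_distrr /=; apply: eq_bigr => j _.
  by rewrite big_distrr.
congr (_ * _); apply: eq_bigr => s _.
rewrite rmorph_sum mulr_suml; apply: eq_bigr => j _.
by rewrite mulr_sumr.
Qed.

Theorem theorem3p1 (isR : bool) (d : measure_display) (T : measurableType d)
  (R : realType) (mu : {measure set T -> \bar R}) (mu1 : mu setT = 1%E)
  (P : set (T -> R[i]))
  (HPfin : exists (m : nat) (f : 'I_m -> T -> R[i]), P = fspan isR f)
  (HPval : isR -> forall p, P p -> forall x, p x \is Num.real)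
  (HPint : forall p, P p -> cintegrable mu p)
  (HPconst : P (fun _ => 1))
  (L : nat) (Hl : 'I_L -> set (T -> R[i]))
  (nl : 'I_L -> nat) (Y : forall l : 'I_L, 'I_(nl l) -> T -> R[i])
  (HYbasis : forall l, Hl l = fspan isR (Y l))
  (HYon : forall l, c_orthonormal mu (Y l))
  (HlH : forall l, Hl l `<=` [set p | P p /\ cint mu p = 0])
  (Hsum : forall h, P h -> cint mu h = 0 ->
     exists hs : 'I_L -> T -> R[i],
       (forall l, Hl l (hs l)) /\ h = (fun x => \sum_(l < L) hs l x))
  (Hdirect : forall hs hs' : 'I_L -> T -> R[i],
       (forall l, Hl l (hs l)) -> (forall l, Hl l (hs' l)) ->
       (fun x => \sum_(l < L) hs l x) = (fun x => \sum_(l < L) hs' l x) ->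
       hs = hs')
  (c : 'I_L -> R) (Hc : forall l, 0 < c l)
  (n : nat) (v : 'I_n -> T) (w : 'I_n -> R) (Hw : \sum_(j < n) w j = 1) :
  let A := \sum_(j < n) \sum_(k < n)
             (w j * w k)%:C * \sum_(l < L) (c l)%:C * repr_kernel (Y l) (v j) (v k) in
  0 <= A /\
  (A = 0 <-> forall p, P p -> cint mu p = \sum_(j < n) (w j)%:C * p (v j)).
Proof.
move=> A; rewrite /A A_eq.
set b := fun l s => \sum_(j < n) (w j)%:C * Y l s (v j).
change (0 <= \sum_(l < L) (c l)%:C * \sum_(s < nl l) b l s * conjc (b l s) /\
  (\sum_(l < L) (c l)%:C * \sum_(s < nl l) b l s * conjc (b l s) = 0 <->
  forall p, P p -> cint mu p = \sum_(j < n) (w j)%:C * p (v j))).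
have ge0 : forall l, 0 <= (c l)%:C * \sum_(s < nl l) b l s * conjc (b l s).
  move=> l; apply: mulr_ge0; first by rewrite ler0c ltW.
  by apply: sumr_ge0 => s _; exact: mulcJ_ge0.
split; first by apply: sumr_ge0 => l _; exact: ge0.
have Yin : forall l s, Hl l (Y l s).
  move=> l s; rewrite HYbasis; exists (fun t => (t == s)%:R); split.
    by move=> t; rewrite /Defs.scalar; case: (isR) => //; exact: realn.
  apply/funext => x; rewrite (bigD1 s) //= eqxx mul1r big1 ?addr0 //.
  by move=> t /negbTE ->; rewrite mul0r.
split.
- move=> A0.
  have b0 : forall l s, b l s = 0.
    move=> l s.
    have := psumr_eq0P (fun l _ => ge0 l) A0 (i:=l) isT.
    move/eqP; rewrite mulf_eq0 => /orP [].
      by move=> /eqP [] hc; have := Hc l; rewrite hc ltxx.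
    move/eqP => S0.
    have := psumr_eq0P (fun s _ => mulcJ_ge0 (b l s)) S0 (i:=s) isT.
    by move/eqP; rewrite mulf_eq0 conjc_eq0 orbb => /eqP.
  move=> p Pp.
  have [m [f Pf]] := HPfin.
  set cp := cint mu p.
  set h := fun x => p x - cp.
  have Ph : P h.
    have cpr : isR -> cp \is Num.real.
      by move=> hR; apply: cint_realIm => x; exact: HPval.
    have := Pp; have := HPconst; rewrite Pf => -[a1 [sa1 E1]] [ap [sap Ep]].
    exists (fun i => ap i - cp * a1 i); split.
      move=> i; move: (sap i) (sa1 i) cpr; rewrite /Defs.scalar.
      by case: (isR) => // r1 r2 r3; rewrite rpredB // rpredM // r3.
    apply/funext => x; rewrite /h Ep.
    rewrite [RHS](eq_bigr (fun i => ap i * f i x - cp * (a1 i * f i x))); last first.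
      by move=> i _; rewrite mulrBl mulrA.
    by rewrite sumrB -mulr_sumr -(congr1 (fun g => g x) E1) mulr1.
  have ch : cint mu h = 0.
    by rewrite /h (@cintB_cst _ _ _ mu mu1 p cp (HPint p Pp)) subrr.
  have [hs [Hhs Eh]] := Hsum h Ph ch.
  have hs0 : forall l, \sum_(j < n) (w j)%:C * hs l (v j) = 0.
    move=> l; have := Hhs l; rewrite HYbasis => -[a [_ ->]].
    under eq_bigr do rewrite mulr_sumr.
    rewrite exchange_big big1 // => s _.
    under eq_bigr do rewrite mulrCA.
    rewrite -mulr_sumr; change (a s * b l s = 0).
    by rewrite b0 mulr0.
  have pE : forall x, p x = h x + cp by move=> x; rewrite /h subrK.
  under eq_bigr do rewrite pE mulrDr.
  rewrite big_split /= -mulr_suml -rmorph_sum Hw mul1r.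
  under eq_bigr do rewrite Eh mulr_sumr.
  by rewrite exchange_big big1 ?add0r.
- move=> des.
  apply: big1 => l _.
  rewrite big1 ?mulr0 // => s _.
  have [PY cY] := HlH l _ (Yin l s).
  have -> : b l s = 0 by rewrite /b -des.
  by rewrite mul0r.
Qed.
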